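(* In the single-period model described in the context, with short sales prohibitions (admissible strategies $h=(h_0,\dots,h_M)$ satisfy $h_0\in\mathbb{R}$ arbitrary and $h_m\ge 0$ for $m=1,\dots,M$), there is no arbitrage under model uncertainty if and only if there exists a probability measure $Q$ on $\Omega$ with $Q(\omega)>0$ for all $\omega\in\Omega$ and $E_Q[\Delta S_m^*]\le 0$ for all $m=1,\dots,M$.
   Context: Single-period model: $\Omega=\{\omega_1,\dots,\omega_K\}$ is a finite sample space with all subsets measurable. $\mathcal{P}$ is a nonempty family of probability measures on $\Omega$ with $\sup_{P\in\mathcal{P}}P(\omega)>0$ for every $\omega\in\Omega$. There is a bond with $S_0(0)=1$, $S_0(1)=1+r$, $r\ge 0$ a constant, and $M$ risky securities with known initial prices $S_m(0)>0$ and random terminal prices $S_m(1):\Omega\to\mathbb{R}$, $m=1,\dots,M$. Discounted prices: $S_m^*(t)=S_m(t)/S_0(t)$, $t=0,1$, and $\Delta S_m^*=S_m^*(1)-S_m^*(0)$. For a trading strategy $h=(h_0,\dots,h_M)$, the discounted portfolio value is $V_t^*=h_0+\sum_{m=1}^M h_m S_m^*(t)$, $t=0,1$. A trading strategy is an arbitrage under model uncertainty if (i) $V_0^*=0$ and (ii) $V_1^*(\omega)\ge 0$ for all $\omega\in\Omega$ and $\sup_{P\in\mathcal{P}}E_P[V_1^*]>0$. ''No arbitrage under model uncertainty'' means no admissible trading strategy is an arbitrage under model uncertainty. *)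

(* Defs.v *)
From HB Require Import structures.
From mathcomp Require Import all_boot all_order all_algebra.
From mathcomp Require Import reals.
Set Implicit Arguments. Unset Strict Implicit. Unset Printing Implicit Defensive.
Import Order.TTheory GRing.Theory Num.Theory.
Local Open Scope ring_scope.

Section Model.
Variables (R : realType) (Omega : finType).

Definition is_prob (P : {ffun Omega -> R}) : Prop :=
  (forall w, 0 <= P w) /\ \sum_(w : Omega) P w = 1.

Definition expect (P : {ffun Omega -> R}) (X : Omega -> R) : R :=
  \sum_(w : Omega) P w * X w.

Variables (M : nat) (r : R) (S0 : 'I_M -> R) (S1 : 'I_M -> Omega -> R).

(* discounted prices: S*_m(0) = S_m(0) / 1, S*_m(1) = S_m(1) / (1 + r) *)
Definition disc1 (m : 'I_M) (w : Omega) : R := S1 m w / (1 + r).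
Definition dS (m : 'I_M) (w : Omega) : R := disc1 m w - S0 m.

Definition V0 (h0 : R) (h : 'I_M -> R) : R := h0 + \sum_(m < M) h m * S0 m.
Definition V1 (h0 : R) (h : 'I_M -> R) (w : Omega) : R :=
  h0 + \sum_(m < M) h m * disc1 m w.

Definition admissible (h : 'I_M -> R) : Prop := forall m, 0 <= h m.

(* Arbitrage under model uncertainty for the family Pfam.
   sup_{P in Pfam} E_P[V1] > 0 is written as: some P in Pfam has E_P[V1] > 0. *)
Definition arbitrage_MU (Pfam : {ffun Omega -> R} -> Prop)
    (h0 : R) (h : 'I_M -> R) : Prop :=
  V0 h0 h = 0 /\ (forall w, 0 <= V1 h0 h w) /\
  exists2 P, Pfam P & 0 < expect P (V1 h0 h).

Definition NA_MU (Pfam : {ffun Omega -> R} -> Prop) : Prop :=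
  ~ exists h0 h, admissible h /\ arbitrage_MU Pfam h0 h.

End Model.

(* Main.v *)
Require Import Defs.
From HB Require Import structures.
From mathcomp Require Import all_boot all_order all_algebra.
From mathcomp Require Import reals.
From mathcomp Require Import ring lra.
From Stdlib Require Import Classical.
Import Order.TTheory GRing.Theory Num.Theory.
Local Open Scope ring_scope.

Section Fk.
Variables (R : realType) (V : Type) (comb : V -> R -> V -> V).
Definition lin (f : V -> R) := forall u t v, f (comb u t v) = f u + t * f v.

Lemma farkas n : forall (C : 'I_n -> V -> R) (d : V -> R), lin d -> (forall j, lin (C j)) ->
  (exists x, 0 < d x /\ forall j, 0 <= C j x) \/
  (exists y (z : 'I_n -> R), 0 < y /\ (forall j, 0 <= z j) /\
     forall v, y * d v + \sum_(j < n) z j * C j v = 0).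
Proof.
elim: n => [|n IH] C d ld lC.
  case: (classic (exists v, d v != 0)) => [[v dv]|nd].
    left; case: (ltrgtP 0 (d v)) => [h|h|h]; last by rewrite h eqxx in dv.
    - by exists v; split => // -[].
    - exists (comb v (-2) v); split; last by case.
      rewrite ld; lra.
  right; exists 1, (fun _ => 0); split => //; split => // v.
  rewrite big_ord0 addr0 mul1r; apply/eqP; apply/negPn/negP => h; apply: nd; by exists v.
pose C' j := C (lift ord_max j); pose c := C ord_max.
have wl : forall i : 'I_n, widen_ord (leqnSn n) i = lift ord_max i by move=> i; apply: val_inj; exact: (esym (lift_max i)).
have lC' : forall j, lin (C' j) by move=> j; apply: lC.
case: (IH C' d ld lC') => [[x [dx Cx]]|[y [z [y0 [z0 hz]]]]]; last first.
  right; exists y, (fun j => oapp z 0 (unlift ord_max j)); split => //; split.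
    by move=> j; case: (unliftP ord_max j) => [i _|_] /=.
  move=> v; rewrite big_ord_recr /= unlift_none /= mul0r addr0.
  rewrite -[X in _ = X](hz v); congr (_ + _); apply: eq_bigr => i _.
  by rewrite wl liftK.
case: (lerP 0 (c x)) => [cx|cx].
  left; exists x; split => // j; case: (unliftP ord_max j) => [i ->|->]; [exact: Cx|exact: cx].
pose g := c x.
have gp : 0 < - g by rewrite oppr_gt0.
pose d' v := d x * c v - g * d v.
pose C'' j v := C' j x * c v - g * C' j v.
have ld' : lin d' by move=> u t v; rewrite /d' ld /c (lC ord_max); ring.
have lC'' : forall j, lin (C'' j) by move=> j u t v; rewrite /C'' (lC' j) /c (lC ord_max); ring.
case: (IH C'' d' ld' lC'') => [[w [dw Cw]]|[y [z [y0 [z0 hz]]]]].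
  left; exists (comb w (c w / (- g)) x).
  have gn : g != 0 by rewrite ltr0_neq0.
  split.
    rewrite ld; have : 0 < d' w / (- g) by exact: divr_gt0.
    by congr (0 < _); rewrite /d'; field.
  move=> j; case: (unliftP ord_max j) => [i ->|->].
    rewrite (lC (lift ord_max i)); have : 0 <= C'' i w / (- g) by apply: divr_ge0; [apply: Cw|exact: ltW].
    by congr (0 <= _); rewrite /C'' /C'; field.
  rewrite (lC ord_max) -/c; have -> : c w + c w / - g * c x = 0 by rewrite /g; field.
  by [].
right; exists (- g * y), (fun j => oapp (fun i => - g * z i) (y * d x + \sum_(i < n) z i * C' i x) (unlift ord_max j)).
split; first by exact: mulr_gt0.
split.
  move=> j; case: (unliftP ord_max j) => [i _|_] /=.
    by apply: mulr_ge0 => //; exact: ltW.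
  apply: addr_ge0; first by apply: mulr_ge0 => //; exact: ltW.
  by apply: sumr_ge0 => i _; apply: mulr_ge0.
move=> v; rewrite big_ord_recr /= unlift_none /=.
have e : \sum_(i < n) oapp (fun i0 : 'I_n => - g * z i0) (y * d x + \sum_(i0 < n) z i0 * C' i0 x) (unlift ord_max (widen_ord (leqnSn n) i)) * C (widen_ord (leqnSn n) i) v = - g * \sum_(i < n) z i * C' i v.
  rewrite mulr_sumr; apply: eq_bigr => i _; rewrite wl liftK /=; rewrite /C'; ring.
rewrite e; move: (hz v); rewrite /d' /C''.
have -> : \sum_(j < n) z j * (C' j x * c v - g * C' j v) = (\sum_(j < n) z j * C' j x) * c v - g * \sum_(j < n) z j * C' j v.
  rewrite mulr_suml mulr_sumr -sumrB; apply: eq_bigr => i _; ring.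
rewrite /c => h; rewrite -[RHS]h; ring.
Qed.
End Fk.

Lemma sum_pos (R : realType) (T : finType) (F : T -> R) (w0 : T) :
  (forall w, 0 <= F w) -> 0 < F w0 -> 0 < \sum_(w : T) F w.
Proof.
move=> F0 Fw; rewrite (bigD1 w0) //=; apply: (lt_le_trans Fw).
by rewrite lerDl; apply: sumr_ge0 => w _.
Qed.

Lemma V1_eq (R : realType) (Omega : finType) (M : nat) (r : R) (S0 : 'I_M -> R)
  (S1 : 'I_M -> Omega -> R) h0 h w :
  V0 S0 h0 h = 0 -> V1 r S1 h0 h w = \sum_(m < M) h m * dS r S0 S1 m w.
Proof.
rewrite /V0 /V1 /dS => e.
have -> : h0 = - \sum_(m < M) h m * S0 m by apply/eqP; rewrite -addr_eq0 e.
rewrite addrC -sumrB; apply: eq_bigr => m _; ring.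
Qed.

Theorem mainTheorem2 (R : realType) (Omega : finType)
  (Pfam : {ffun Omega -> R} -> Prop)
  (HPprob : forall P, Pfam P -> is_prob P)
  (HPne : exists P, Pfam P)
  (HPsupp : forall w : Omega, exists2 P, Pfam P & 0 < P w)
  (M : nat) (r : R) (Hr : 0 <= r)
  (S0 : 'I_M -> R) (HS0 : forall m, 0 < S0 m)
  (S1 : 'I_M -> Omega -> R) :
  NA_MU r S0 S1 Pfam <->
  exists Q : {ffun Omega -> R},
    is_prob Q /\ (forall w, 0 < Q w) /\
    (forall m : 'I_M, expect Q (dS r S0 S1 m) <= 0).
Proof.
split; last first.
  move=> [Q [[Q0 Q1] [Qp QE]]] [h0 [h [adm [V0e [V1p [P PF EP]]]]]].
  have [w1 w1p] : exists w, 0 < V1 r S1 h0 h w.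
    apply: NNPP => nw; move: EP; rewrite /expect big1 ?ltxx // => w _.
    have : V1 r S1 h0 h w <= 0 by rewrite leNgt; apply/negP => hw; apply: nw; exists w.
    by move=> hle; rewrite (@le_anti _ _ (V1 r S1 h0 h w) 0) ?mulr0 // hle V1p.
  have : 0 < expect Q (V1 r S1 h0 h).
    apply: (@sum_pos _ _ _ w1) => [w|]; last exact: mulr_gt0.
    by apply: mulr_ge0 => //; exact: ltW.
  rewrite /expect; under eq_bigr do rewrite (V1_eq _ _ _ _ _ _ _ _ _ V0e) mulr_sumr.
  rewrite exchange_big /= ltNge => /negP; apply.
  apply: sumr_le0 => m _.
  have -> : \sum_(i : Omega) Q i * (h m * dS r S0 S1 m i) = h m * expect Q (dS r S0 S1 m).
    by rewrite /expect mulr_sumr; apply: eq_bigr => i _; ring.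
  by apply: mulr_ge0_le0.
move=> NA.
pose V := option Omega -> R.
pose comb (u : V) (t : R) (v : V) : V := fun i => u i + t * v i.
pose C (i : 'I_(#|Omega| + M)) : V -> R :=
  match split i with
  | inl k => fun v => v (Some (enum_val k)) - v None
  | inr m => fun v => - \sum_(w : Omega) v (Some w) * dS r S0 S1 m w
  end.
pose d (v : V) := v None.
have ld : @lin R V comb d by move=> u t v.
have lC : forall j, @lin R V comb (C j).
  move=> j u t v; rewrite /C; case: (split j) => [k|m] /=.
    rewrite /comb; ring.
  rewrite /comb; under eq_bigr do rewrite mulrDl -mulrA.
  rewrite big_split -mulr_sumr /=; ring.
have sl : forall k, split (lshift M k) = inl k := fun k => unsplitK (inl k).
have sr : forall k, split (rshift #|Omega| k) = inr k := fun k => unsplitK (inr k).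
case: (farkas _ _ _ _ _ _ ld lC) => [[x [dx Cx]]|[y [z [y0 [z0 hz]]]]].
  have xs : forall w, 0 < x (Some w).
    move=> w; have := Cx (lshift M (enum_rank w)); rewrite /C sl enum_rankK.
    rewrite subr_ge0 => h; exact: lt_le_trans dx h.
  have xm : forall m, \sum_(w : Omega) x (Some w) * dS r S0 S1 m w <= 0.
    by move=> m; have := Cx (rshift #|Omega| m); rewrite /C sr oppr_ge0.
  case: HPne => P0 /HPprob [_ P01].
  have [w0 _ | emp] := pickP Omega; last first.
    move: P01; rewrite big1; last by move=> w _; have := emp w.
    by move/eqP; rewrite eq_sym oner_eq0.
  pose S := \sum_(w : Omega) x (Some w).
  have Sp : 0 < S by apply: (@sum_pos _ _ _ w0) => [w|]; [exact: ltW|].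
  exists [ffun w => x (Some w) / S]; split; last split.
  - split; first by move=> w; rewrite ffunE; apply: divr_ge0; [exact: ltW|exact: ltW].
    under eq_bigr do rewrite ffunE; rewrite -mulr_suml divff //; exact: lt0r_neq0.
  - by move=> w; rewrite ffunE; exact: divr_gt0.
  - move=> m; rewrite /expect.
    have -> : \sum_(w : Omega) [ffun w0 => x (Some w0) / S] w * dS r S0 S1 m w
        = (\sum_(w : Omega) x (Some w) * dS r S0 S1 m w) / S.
      by rewrite mulr_suml; apply: eq_bigr => w _; rewrite ffunE; ring.
    by apply: mulr_le0_ge0 => //; rewrite invr_ge0; exact: ltW.
exfalso; apply: NA.
pose h m := z (rshift #|Omega| m).
pose X w := \sum_(m < M) h m * dS r S0 S1 m w.
have hX : forall w0, X w0 = z (lshift M (enum_rank w0)).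
  move=> w0; have := hz (fun i => if i == Some w0 then 1 else 0).
  rewrite big_split_ord /= /C.
  under eq_bigr do rewrite sl.
  under [X in _ + (_ + X) = _ -> _]eq_bigr do rewrite sr.
  rewrite /= /d /= mulr0 add0r.
  rewrite (bigD1 (enum_rank w0)) //= enum_rankK eqxx big1; last first.
    move=> k kn; case: eqP => [[e]|_]; last by rewrite subrr mulr0.
    by move: kn; rewrite -e enum_valK eqxx.
  rewrite subr0 mulr1 addr0.
  under [X in _ + X = _ -> _]eq_bigr => m _.
    rewrite (bigD1 w0) //= eqxx mul1r big1 ?addr0; last first.
      by move=> w wn; case: eqP => [[e]|_]; [by rewrite e eqxx in wn|rewrite mul0r].
  over.
  move=> e; rewrite -[X w0]addr0 -e /X /h addrCA -big_split /= big1 ?addr0 // => m _; ring.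
have hy : y = \sum_(k < #|Omega|) z (lshift M k).
  have := hz (fun i => if i == None then 1 else 0).
  rewrite big_split_ord /= /C.
  under eq_bigr do rewrite sl.
  under [X in _ + (_ + X) = _ -> _]eq_bigr do rewrite sr.
  rewrite /d /= mulr1 [X in _ + (_ + X)]big1; last first.
    by move=> m _; rewrite big1 ?oppr0 ?mulr0 // => w _; rewrite mul0r.
  rewrite addr0.
  have -> : \sum_(i < #|Omega|) z (lshift M i) * (0 - 1) = - \sum_(i < #|Omega|) z (lshift M i).
    by rewrite -sumrN; apply: eq_bigr => k _; ring.
  move=> e; lra.
have [k kp] : exists k, 0 < z (lshift M k).
  apply: NNPP => nk; move: y0; rewrite hy big1 ?ltxx // => k _.
  apply/eqP; rewrite eq_le z0 andbT leNgt; apply/negP => kp; apply: nk; by exists k.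
pose w1 := enum_val k.
have Xw1 : 0 < X w1 by rewrite hX /w1 enum_valK.
exists (- \sum_(m < M) h m * S0 m), h; split; first by move=> m; exact: z0.
have V0e : V0 S0 (- \sum_(m < M) h m * S0 m) h = 0 by rewrite /V0 addNr.
split => //; split.
  by move=> w; rewrite (V1_eq _ _ _ _ _ _ _ _ _ V0e) -/(X w) hX.
case: (HPsupp w1) => P PF Pw; exists P => //.
have [P0 _] := HPprob _ PF.
apply: (@sum_pos _ _ _ w1) => [w|].
  by apply: mulr_ge0 => //; rewrite (V1_eq _ _ _ _ _ _ _ _ _ V0e) -/(X w) hX.
by rewrite (V1_eq _ _ _ _ _ _ _ _ _ V0e) -/(X w1); exact: mulr_gt0.
Qed.
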